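(* Let $m,n$ be coprime positive integers and let $(A,B)\in\mathrm{SL}(2,\mathbb{C})^2$ satisfy $A^m=B^n$ (i.e. $(A,B)$ defines a representation $\rho$ of $G_{m,n}=\langle x,y\mid x^m=y^n\rangle$ into $\mathrm{SL}(2,\mathbb{C})$ with $\rho(x)=A$, $\rho(y)=B$). If any of the following holds: (a) $A^m=B^n\neq\pm\mathrm{Id}$; (b) $A=\pm\mathrm{Id}$ or $B=\pm\mathrm{Id}$; (c) $A$ or $B$ is not diagonalizable, then $\rho$ is reducible, i.e. $A$ and $B$ have a common eigenvector. *)

(* Defs.v *)
From HB Require Import structures.
From mathcomp Require Import all_boot all_order all_algebra.
From mathcomp Require Import reals.
From mathcomp Require Import complex.
Set Implicit Arguments. Unset Strict Implicit. Unset Printing Implicit Defensive.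
Import Order.TTheory GRing.Theory Num.Theory.
Local Open Scope ring_scope.

Definition inSL2 {K : fieldType} (A : 'M[K]_2) : Prop := \det A = 1.

Definition pm_id {K : fieldType} (A : 'M[K]_2) : Prop := A = 1%:M \/ A = - 1%:M.

Definition is_eigenvector {K : fieldType} (A : 'M[K]_2) (v : 'cV[K]_2) : Prop :=
  v != 0 /\ exists lam : K, A *m v = lam *: v.

Definition reducible_pair {K : fieldType} (A B : 'M[K]_2) : Prop :=
  exists v : 'cV[K]_2, is_eigenvector A v /\ is_eigenvector B v.

(* Main.v *)
Require Import Defs.
From HB Require Import structures.

From mathcomp Require Import all_boot all_order all_algebra.
From mathcomp Require Import reals.
From mathcomp Require Import complex separable.
From mathcomp Require Import ring.
From Stdlib Require Import Classical.
Import Order.TTheory GRing.Theory Num.Theory.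
Local Open Scope ring_scope.

Section K.
Variable K : numClosedFieldType.

Lemma ev_exists (M : 'M[K]_2) : exists a, exists2 v : 'rV_2, v *m M = a *: v & v != 0.
Proof.
have : size (char_poly M) != 1 by rewrite size_char_poly.
move=> /closed_rootP [x Hx]; exists x; apply/eigenvalueP.
by rewrite eigenvalue_root_char.
Qed.

Lemma common_rows (C A B : 'M[K]_2) :
  (forall a, C != a%:M) -> A *m C = C *m A -> B *m C = C *m B ->
  exists v : 'rV_2, v != 0 /\ (exists a, v *m A = a *: v) /\ (exists b, v *m B = b *: v).
Proof.
move=> Cns cA cB.
have [l [v vC vn0]] := ev_exists C.
pose M := C - l%:M.
have Mn0 : M != 0 by rewrite subr_eq0.
have vM : (v <= kermx M)%MS by apply/sub_kermxP; rewrite mulmxBr vC mul_mx_scalar subrr.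
have rk : (\rank (kermx M) <= \rank v)%N.
  rewrite mxrank_ker rank_rV vn0.
  have : \rank M != 0%N by rewrite mxrank_eq0.
  by case: (\rank M) => [|[|k]].
have kv : (kermx M <= v)%MS.
  by move: (mxrank_leqif_sup vM) => [_ <-]; rewrite eqn_leq rk mxrankS.
have key X : X *m C = C *m X -> exists a, v *m X = a *: v.
  move=> cX; apply/sub_rVP; apply: submx_trans kv; apply/sub_kermxP.
  rewrite -mulmxA mulmxBr cX mul_mx_scalar mulmxBr mulmxA vC -scalemxAl -scalemxAr.
  by rewrite subrr.
exists v; split; first exact: vn0.
by split; apply: key.
Qed.

Lemma common_cols (C A B : 'M[K]_2) :
  (forall a, C != a%:M) -> A *m C = C *m A -> B *m C = C *m B ->
  exists v : 'cV_2, v != 0 /\ (exists a, A *m v = a *: v) /\ (exists b, B *m v = b *: v).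
Proof.
move=> Cns cA cB.
have [] := @common_rows C^T A^T B^T.
- by move=> a; apply: contra (Cns a) => /eqP/(f_equal trmx); rewrite trmxK tr_scalar_mx => ->.
- by rewrite -!trmx_mul cA.
- by rewrite -!trmx_mul cB.
move=> v [vn0 [[a Ha] [b Hb]]]; exists v^T; split.
  by apply: contra vn0 => /eqP/(f_equal trmx); rewrite trmxK trmx0 => ->.
split; [exists a| exists b]; apply: trmx_inj; rewrite trmx_mul trmxK ?Ha ?Hb; by rewrite linearZ /= trmxK.
Qed.

Lemma sep_Xn (m : nat) (c : K) : (0 < m)%N -> c != 0 -> separable_poly ('X^m - c%:P).
Proof.
case: m => // m _ cn0.
rewrite unlock; apply/Bezout_coprimepP.
pose a := (m.+1%:R * c)^-1.
have an : a * m.+1%:R * c = 1 by rewrite /a -mulrA mulVf // mulf_neq0 // pnatr_eq0.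
exists (- (a * m.+1%:R)%:P, a%:P * 'X).
rewrite derivB derivXn derivC subr0 /=.
have -> : - (a * m.+1%:R)%:P * ('X^(m.+1) - c%:P) + a%:P * 'X * (('X^m) *+ m.+1)
   = (a * m.+1%:R * c)%:P.
  rewrite !polyCM polyC_natr -mulr_natr exprS; ring.
by rewrite an eqpxx.
Qed.

Lemma diag_pow (A : 'M[K]_2) (m : nat) (c : K) :
  (0 < m)%N -> c != 0 -> A ^+ m = c%:M -> diagonalizable A.
Proof.
move=> m0 cn0 Am.
have [rs Hrs] := closed_field_poly_normal ('X^m - c%:P).
rewrite lead_coefXnsubC // scale1r in Hrs.
apply/diagonalizableP; exists rs.
  by rewrite -separable_prod_XsubC -Hrs sep_Xn.
rewrite -Hrs; apply: mxminpoly_min.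
by rewrite rmorphB /= rmorphXn /= horner_mx_X horner_mx_C Am subrr.
Qed.
End K.
Arguments ev_exists {K}. Arguments common_cols {K}. Arguments diag_pow {K}.

Lemma det_pow (F : comNzRingType) (A : 'M[F]_2) (m : nat) : \det (A ^+ m) = \det A ^+ m.
Proof.
elim: m => [|m IH]; first by rewrite !expr0 det1.
by rewrite !exprS detM IH.
Qed.

Lemma ev_col (K : numClosedFieldType) (B : 'M[K]_2) :
  exists a, exists2 v : 'cV_2, B *m v = a *: v & v != 0.
Proof.
have [a [v Hv vn0]] := ev_exists B^T.
exists a; exists v^T.
  apply: trmx_inj; by rewrite trmx_mul trmxK Hv linearZ /= trmxK.
by apply: contra vn0 => /eqP/(f_equal trmx); rewrite trmxK trmx0 => ->.
Qed.

Theorem lemma2p2 (R : realType) (m n : nat) (A B : 'M[complex R]_2) :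
  (0 < m)%N -> (0 < n)%N -> coprime m n ->
  inSL2 A -> inSL2 B -> A ^+ m = B ^+ n ->
  (~ pm_id (A ^+ m)
   \/ (pm_id A \/ pm_id B)
   \/ (~ diagonalizable A \/ ~ diagonalizable B)) ->
  reducible_pair A B.
Proof.
move=> m0 n0 _ dA dB AB H.
have caseA : ~ pm_id (A ^+ m) -> reducible_pair A B.
  move=> npm.
  have Cns : forall a, A ^+ m != a%:M.
    move=> a; apply/eqP => Ha; apply: npm.
    have : \det (A ^+ m) = 1 by rewrite det_pow dA expr1n.
    rewrite Ha det_scalar => /eqP; rewrite sqrf_eq1 => /orP [] /eqP Ea.
      by left; rewrite Ea.
    by right; rewrite Ea raddfN.
  have cA : A *m A ^+ m = A ^+ m *m A by exact: (commrX m (erefl (A * A))).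
  have cB : B *m A ^+ m = A ^+ m *m B by rewrite AB; exact: (commrX n (erefl (B * B))).
  have [v [vn0 [[a Ha] [b Hb]]]] := common_cols (A ^+ m) A B Cns cA cB.
  by exists v; split; split => //; [exists a | exists b].
have pmdiag (X : 'M[complex R]_2) k : (0 < k)%N -> X ^+ k = A ^+ m -> pm_id (A ^+ m) -> diagonalizable X.
  move=> k0 XA [] E.
  - apply: (diag_pow X k 1 k0 (oner_neq0 _)); by rewrite XA E.
  - apply: (diag_pow X k (-1) k0); first by rewrite oppr_eq0 oner_neq0.
    by rewrite XA E raddfN.
case: H => [|[[]|[]]]; first exact: caseA.
- move=> pA; have [b [v Hv vn0]] := ev_col _ B.
  exists v; split; split => //; last by exists b.
  by case: pA => ->; [exists 1; rewrite mul1mx scale1r | exists (-1); rewrite mulNmx mul1mx scaleN1r].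
- move=> pB; have [a [v Hv vn0]] := ev_col _ A.
  exists v; split; split => //; first by exists a.
  by case: pB => ->; [exists 1; rewrite mul1mx scale1r | exists (-1); rewrite mulNmx mul1mx scaleN1r].
- move=> nd; case: (classic (pm_id (A ^+ m))) => [pm|]; last exact: caseA.
  by exfalso; apply: nd; apply: pmdiag m0 erefl pm.
- move=> nd; case: (classic (pm_id (A ^+ m))) => [pm|]; last exact: caseA.
  by exfalso; apply: nd; apply: pmdiag n0 (esym AB) pm.
Qed.
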